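(* For every integer $n\ge 1$, the subdivision scheme $S_n$ is convergent.
   Context: For an integer $n\ge1$, the subdivision scheme $S_n$ acts on real sequences $\mathbf f^k=(f^k_i)_{i\in\mathbb Z}$ (the value $f^k_i$ being associated with the dyadic point $2^{-k}i$), starting from initial data $\mathbf f^0$, by the refinement rules $$f^{k+1}_{2i}=\frac1{2n-1}\sum_{j=-n+1}^{n-1}f^k_{i+j},\qquad f^{k+1}_{2i+1}=\frac1{2n}\sum_{j=-n+1}^{n}f^k_{i+j},\qquad i\in\mathbb Z,\ k\ge0.$$ A subdivision scheme is called convergent if for every bounded initial sequence $\mathbf f^0$ there is a continuous function $F:\mathbb R\to\mathbb R$ with $\lim_{k\to\infty}\sup_{i\in\mathbb Z}|f^k_i-F(2^{-k}i)|=0$, and $F$ is not identically zero for some initial data; $F$ is called the limit function generated from $\mathbf f^0$. *)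

(* Defs.v *)
From Stdlib Require Import Reals ZArith.
Open Scope R_scope.

Fixpoint rsum (g : nat -> R) (m : nat) : R :=
  match m with
  | O => 0
  | S m' => rsum g m' + g m'
  end.

(* For an index m, i := floor(m/2), so that
   m = 2i (m even) or m = 2i+1 (m odd).
   Even rule: (1/(2n-1)) * sum_{j=-n+1}^{n-1} f(i+j)   (2n-1 terms)
   Odd rule : (1/(2n))   * sum_{j=-n+1}^{n}   f(i+j)   (2n terms)      *)
Definition step (n : nat) (f : Z -> R) : Z -> R :=
  fun m =>
    let i := (m / 2)%Z in
    if Z.even m then
      / INR (2 * n - 1) *
        rsum (fun k => f (i - Z.of_nat n + 1 + Z.of_nat k)%Z) (2 * n - 1)
    else
      / INR (2 * n) *
        rsum (fun k => f (i - Z.of_nat n + 1 + Z.of_nat k)%Z) (2 * n).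

Definition iterate (n : nat) (k : nat) (f0 : Z -> R) : Z -> R :=
  Nat.iter k (step n) f0.

Definition bounded_seq (f : Z -> R) : Prop :=
  exists M : R, forall i : Z, Rabs (f i) <= M.

Definition is_limit_function (n : nat) (f0 : Z -> R) (F : R -> R) : Prop :=
  continuity F /\
  forall eps : R, eps > 0 ->
    exists K : nat, forall k : nat, (k >= K)%nat ->
      forall i : Z, Rabs (iterate n k f0 i - F (IZR i / 2 ^ k)) <= eps.

Definition convergent (n : nat) : Prop :=
  (forall f0 : Z -> R, bounded_seq f0 -> exists F : R -> R, is_limit_function n f0 F)
  /\
  (exists (f0 : Z -> R) (F : R -> R),
      bounded_seq f0 /\ is_limit_function n f0 F /\ exists x : R, F x <> 0).

(* Main.v *)
Require Import Defs.
From Stdlib Require Import Reals ZArith Lra Lia.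
Open Scope R_scope.

Lemma rsum_ext g h N : (forall t, (t < N)%nat -> g t = h t) -> rsum g N = rsum h N.
Proof. induction N; intros H; simpl; auto. rewrite IHN, H; auto. Qed.

Lemma rsum_minus g h N : rsum (fun t => g t - h t) N = rsum g N - rsum h N.
Proof. induction N; simpl; [lra|]. rewrite IHN; lra. Qed.

Lemma rsum_const c N : rsum (fun _ => c) N = INR N * c.
Proof. induction N; simpl rsum; [simpl; lra|]. rewrite IHN, S_INR; lra. Qed.

Lemma rsum_scal c g N : rsum (fun t => c * g t) N = c * rsum g N.
Proof. induction N; simpl; [lra|]. rewrite IHN; lra. Qed.

Lemma rsum_id N : rsum (fun t => INR t) N = INR N * (INR N - 1) / 2.
Proof. induction N; simpl rsum; [simpl; lra|]. rewrite IHN, S_INR; lra. Qed.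

Lemma rsum_shift g N : rsum g (S N) = g O + rsum (fun t => g (S t)) N.
Proof. induction N; simpl rsum; [simpl; lra|]. simpl rsum in IHN. rewrite IHN; lra. Qed.

Lemma rsum_abs h c N : (forall t, (t < N)%nat -> Rabs (h t) <= c t) -> Rabs (rsum h N) <= rsum c N.
Proof.
  induction N; intros H; simpl.
  - rewrite Rabs_R0; lra.
  - eapply Rle_trans; [apply Rabs_triang|].
    apply Rplus_le_compat; [apply IHN; intros; apply H; lia| apply H; lia].
Qed.

Lemma avg_near N g c B : (0 < N)%nat -> (forall t, (t < N)%nat -> Rabs (g t - c) <= B) ->
  Rabs (/ INR N * rsum g N - c) <= B.
Proof.
  intros HN H.
  assert (HN' : 0 < INR N) by (apply lt_0_INR; lia).
  replace (/ INR N * rsum g N - c) with (/ INR N * rsum (fun t => g t - c) N).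
  2:{ rewrite rsum_minus, rsum_const. field. lra. }
  rewrite Rabs_mult, Rabs_inv, Rabs_pos_eq by lra.
  apply Rle_trans with (/ INR N * rsum (fun _ => B) N).
  - apply Rmult_le_compat_l. left; apply Rinv_0_lt_compat; lra. apply rsum_abs; auto.
  - rewrite rsum_const. right; field; lra.
Qed.

Lemma zfacts (i:Z) : Z.even (2*i) = true /\ ((2*i)/2 = i)%Z /\ Z.even (2*i+1) = false /\ ((2*i+1)/2 = i)%Z.
Proof.
  repeat split.
  - rewrite Z.even_mul; reflexivity.
  - rewrite Z.mul_comm, Z.div_mul; lia.
  - rewrite Z.even_add, Z.even_mul; reflexivity.
  - rewrite Z.mul_comm, Z.div_add_l by lia. replace (1/2)%Z with 0%Z by reflexivity; lia.
Qed.

Section S.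
Variable n : nat.
Hypothesis Hn : (1 <= n)%nat.
Let N := (2 * n - 1)%nat.

Lemma step_even f i : step n f (2*i)%Z =
  / INR N * rsum (fun k => f (i - Z.of_nat n + 1 + Z.of_nat k)%Z) N.
Proof. unfold step. destruct (zfacts i) as (H1&H2&_&_). rewrite H1, H2. reflexivity. Qed.

Lemma step_odd f i : step n f (2*i+1)%Z =
  / INR (S N) * rsum (fun k => f (i - Z.of_nat n + 1 + Z.of_nat k)%Z) (S N).
Proof. unfold step. destruct (zfacts i) as (_&_&H1&H2). rewrite H1, H2.
  replace (S N) with (2*n)%nat by (unfold N; lia). reflexivity. Qed.

Lemma lipnat f d : (forall i, Rabs (f (i+1)%Z - f i) <= d) ->
  forall a p, Rabs (f (a + Z.of_nat p)%Z - f a) <= d * INR p.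
Proof.
  intros H a p. induction p.
  - simpl. replace (a+0)%Z with a by lia. rewrite Rminus_diag, Rabs_R0; lra.
  - rewrite S_INR.
    replace (f (a + Z.of_nat (S p))%Z - f a) with
      ((f ((a + Z.of_nat p) + 1)%Z - f (a + Z.of_nat p)%Z) + (f (a + Z.of_nat p)%Z - f a)).
    2:{ replace (a + Z.of_nat (S p))%Z with ((a + Z.of_nat p) + 1)%Z by lia. ring. }
    eapply Rle_trans; [apply Rabs_triang|]. specialize (H (a + Z.of_nat p)%Z). lra.
Qed.

Lemma dpos f d : (forall i, Rabs (f (i+1)%Z - f i) <= d) -> 0 <= d.
Proof. intros H. specialize (H 0%Z). pose proof (Rabs_pos (f (0+1)%Z - f 0%Z)). lra. Qed.

Lemma term_near f d : (forall i, Rabs (f (i+1)%Z - f i) <= d) ->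
  forall i t, (t < 2*n)%nat -> Rabs (f (i - Z.of_nat n + 1 + Z.of_nat t)%Z - f i) <= d * INR n.
Proof.
  intros H i t Ht. pose proof (dpos f d H) as Hd.
  destruct (Nat.le_gt_cases (n-1) t) as [Hle|Hlt].
  - replace (i - Z.of_nat n + 1 + Z.of_nat t)%Z with (i + Z.of_nat (t - (n-1)))%Z by lia.
    eapply Rle_trans; [apply lipnat; auto|]. apply Rmult_le_compat_l; auto.
    apply le_INR; lia.
  - rewrite Rabs_minus_sym.
    assert (Ei : i = ((i - Z.of_nat n + 1 + Z.of_nat t) + Z.of_nat (n - 1 - t))%Z) by lia.
    eapply Rle_trans; [rewrite Ei at 1; apply lipnat; auto|]. apply Rmult_le_compat_l; auto.
    apply le_INR; lia.
Qed.

Lemma near_step f d : (forall i, Rabs (f (i+1)%Z - f i) <= d) ->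
  forall m, Rabs (step n f m - f (m / 2)%Z) <= d * INR n.
Proof.
  intros H m.
  assert (Hm : m = (2 * (m/2) + m mod 2)%Z) by (apply Z.div_mod; lia).
  pose proof (Z.mod_pos_bound m 2 ltac:(lia)).
  set (i := (m/2)%Z) in *.
  assert (m mod 2 = 0 \/ m mod 2 = 1)%Z as [E|E] by lia; rewrite E in Hm; rewrite Hm.
  - rewrite Z.add_0_r, step_even. apply avg_near. unfold N; lia.
    intros t Ht. apply term_near; auto. unfold N in Ht; lia.
  - rewrite step_odd. apply avg_near. lia.
    intros t Ht. apply term_near; auto. unfold N in Ht; lia.
Qed.


Lemma bound_final N0 (r d : R) : (0 < N0)%nat -> Rabs r <= d * (INR N0 * (INR N0 + 1) / 2) ->
  Rabs (/ (INR N0 * (INR N0 + 1)) * r) <= d / 2.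
Proof.
  intros HN H. assert (0 < INR N0) by (apply lt_0_INR; lia).
  rewrite Rabs_mult, Rabs_inv, Rabs_pos_eq by nra.
  apply Rle_trans with (/ (INR N0 * (INR N0 + 1)) * (d * (INR N0 * (INR N0 + 1) / 2))).
  - apply Rmult_le_compat_l; auto. left; apply Rinv_0_lt_compat; nra.
  - right; field; lra.
Qed.

Lemma diff_step f d : (forall i, Rabs (f (i+1)%Z - f i) <= d) ->
  forall m, Rabs (step n f (m+1)%Z - step n f m) <= d / 2.
Proof.
  intros H m. pose proof (dpos f d H) as Hd.
  assert (HN : (0 < N)%nat) by (unfold N; lia).
  assert (HN' : 0 < INR N) by (apply lt_0_INR; lia).
  assert (Hm : m = (2 * (m/2) + m mod 2)%Z) by (apply Z.div_mod; lia).
  pose proof (Z.mod_pos_bound m 2 ltac:(lia)).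
  set (i := (m/2)%Z) in *.
  set (g := fun k : nat => f (i - Z.of_nat n + 1 + Z.of_nat k)%Z).
  assert (m mod 2 = 0 \/ m mod 2 = 1)%Z as [E|E] by lia; rewrite E in Hm; rewrite Hm.
  - rewrite Z.add_0_r, step_odd, step_even. fold g.
    replace (/ INR (S N) * rsum g (S N) - / INR N * rsum g N) with
      (/ (INR N * (INR N + 1)) * rsum (fun t => g N - g t) N).
    2:{ simpl rsum. rewrite rsum_minus, rsum_const, S_INR. field. lra. }
    apply bound_final; auto.
    eapply Rle_trans. apply (rsum_abs _ (fun t => d * (INR N - INR t))).
    + intros t Ht. unfold g. rewrite <- minus_INR by lia.
      replace (i - Z.of_nat n + 1 + Z.of_nat N)%Z with
        ((i - Z.of_nat n + 1 + Z.of_nat t) + Z.of_nat (N - t))%Z by (unfold N; lia).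
      apply lipnat; auto.
    + rewrite rsum_scal, rsum_minus, rsum_const, rsum_id. right; field.
  - replace (2 * i + 1 + 1)%Z with (2 * (i+1))%Z by lia.
    set (h := fun t => g (S t)).
    assert (E1: step n f (2*(i+1))%Z = /INR N * rsum h N).
    { rewrite step_even; apply f_equal; apply rsum_ext; intros; unfold h,g; f_equal; lia. }
    assert (E2: step n f (2*i+1)%Z = /INR (S N) * (g O + rsum h N)).
    { rewrite step_odd, rsum_shift; reflexivity. }
    rewrite E1, E2.
    replace (/ INR N * rsum h N - / INR (S N) * (g O + rsum h N)) with
      (/ (INR N * (INR N + 1)) * rsum (fun t => h t - g O) N).
    2:{ rewrite rsum_minus, rsum_const, S_INR. field. lra. }
    apply bound_final; auto.
    eapply Rle_trans. apply (rsum_abs _ (fun t => d * (INR t + 1))).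
    + intros t Ht. unfold h, g. rewrite <- S_INR.
      replace (i - Z.of_nat n + 1 + Z.of_nat (S t))%Z with
        ((i - Z.of_nat n + 1 + Z.of_nat 0) + Z.of_nat (S t))%Z by lia.
      apply lipnat; auto.
    + rewrite rsum_scal.
      replace (rsum (fun t => INR t + 1) N) with (rsum (fun t => INR t - (-1)) N) by
        (apply rsum_ext; intros; ring).
      rewrite rsum_minus, rsum_const, rsum_id. right; field.
Qed.

End S.

Lemma small_pow (B eps : R) : eps > 0 -> exists K, forall k, (k >= K)%nat -> Rabs B / 2^k < eps.
Proof.
  intros He.
  assert (Hy : 0 < eps / (Rabs B + 1)) by (apply Rdiv_lt_0_compat; [lra| pose proof (Rabs_pos B); lra]).
  destruct (pow_lt_1_zero (/2) ltac:(rewrite Rabs_pos_eq; lra) _ Hy) as [K HK].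
  exists K. intros k Hk. specialize (HK k Hk).
  rewrite pow_inv, Rabs_pos_eq in HK by (left; apply Rinv_0_lt_compat, pow_lt; lra).
  pose proof (Rabs_pos B).
  assert (H2 : 0 < 2^k) by (apply pow_lt; lra).
  unfold Rdiv. apply Rle_lt_trans with ((Rabs B + 1) * / 2^k).
  - apply Rmult_le_compat_r; [left; apply Rinv_0_lt_compat; lra| lra].
  - apply Rmult_lt_reg_l with (/ (Rabs B + 1)). apply Rinv_0_lt_compat; lra.
    rewrite <- Rmult_assoc, Rinv_l by lra. lra.
Qed.

Definition fl (x : R) : Z := (up x - 1)%Z.

Lemma fl_spec x : IZR (fl x) <= x < IZR (fl x) + 1.
Proof. unfold fl. rewrite minus_IZR. destruct (archimed x). simpl. lra. Qed.

Lemma fl_unique x z : IZR z <= x < IZR z + 1 -> fl x = z.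
Proof.
  intros [H1 H2]. unfold fl. rewrite <- (tech_up x (z+1)). lia.
  rewrite plus_IZR; simpl; lra. rewrite plus_IZR; simpl; lra.
Qed.

Lemma fl_half y : (fl (2 * y) / 2 = fl y)%Z.
Proof.
  set (m := fl (2*y)).
  assert (Hm : m = (2 * (m/2) + m mod 2)%Z) by (apply Z.div_mod; lia).
  pose proof (Z.mod_pos_bound m 2 ltac:(lia)).
  pose proof (fl_spec (2*y)) as Hs. fold m in Hs.
  symmetry; apply fl_unique.
  rewrite Hm, plus_IZR, mult_IZR in Hs.
  assert (0 <= IZR (m mod 2) <= 1) by (split; apply IZR_le; lia).
  simpl in Hs. lra.
Qed.

Lemma lim_le (u : nat -> R) l a B k : Un_cv u l -> (forall j, (j >= k)%nat -> Rabs (u j - a) <= B) ->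
  Rabs (l - a) <= B.
Proof.
  intros Hu H. destruct (Rle_or_lt (Rabs (l - a)) B) as [|Hlt]; auto.
  destruct (Hu (Rabs (l-a) - B) ltac:(lra)) as [N HN].
  specialize (HN (max N k) ltac:(lia)). specialize (H (max N k) ltac:(lia)).
  unfold R_dist in HN.
  pose proof (Rabs_triang (l - u (max N k)) (u (max N k) - a)).
  replace (l - u (max N k) + (u (max N k) - a)) with (l - a) in H0 by ring.
  rewrite Rabs_minus_sym in HN. lra.
Qed.

Lemma step_const n g : (1 <= n)%nat -> (forall i, g i = 1) -> forall m, step n g m = 1.
Proof.
  intros Hn H m. unfold step. destruct (Z.even m);
  rewrite (rsum_ext _ (fun _ => 1)) by (intros; apply H); rewrite rsum_const; field;
  apply not_0_INR; lia.
Qed.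

Theorem theorem1 : forall n : nat, (1 <= n)%nat -> convergent n.
Proof.
  intros n Hn. split.
  2:{ exists (fun _ => 1), (fun _ => 1). split; [exists 1; intros; rewrite Rabs_R1; lra|].
      split; [split|].
      - apply continuity_const. intros x y; reflexivity.
      - intros eps He. exists O. intros k _ i.
        assert (forall k i, iterate n k (fun _ => 1) i = 1).
        { induction k0; intros; simpl; auto. apply step_const; auto. }
        rewrite H, Rminus_diag, Rabs_R0; lra.
      - exists 0; lra. }
  intros f0 [M HM].
  assert (HM0 : 0 <= M) by (pose proof (Rabs_pos (f0 0%Z)); specialize (HM 0%Z); lra).
  set (fk := fun k => iterate n k f0).
  assert (fkS : forall k, fk (S k) = step n (fk k)) by reflexivity.
  set (dl := fun k : nat => 2 * M / 2^k).
  assert (Hp : forall k, 0 < 2^k) by (intros; apply pow_lt; lra).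
  assert (Hdiff : forall k i, Rabs (fk k (i+1)%Z - fk k i) <= dl k).
  { induction k; intros i.
    - unfold dl; simpl. replace (2*M/1) with (M + M) by field.
      eapply Rle_trans. apply Rabs_triang. rewrite Rabs_Ropp. pose proof (HM i); pose proof (HM (i+1)%Z). lra.
    - rewrite fkS. eapply Rle_trans. apply diff_step; auto.
      unfold dl; simpl. right; field. specialize (Hp k); lra. }
  set (e := fun k x => fk k (fl (2^k * x))).
  set (C := 4 * INR n * M).
  assert (HC : 0 <= C) by (unfold C; pose proof (pos_INR n); nra).
  assert (estep : forall k x, Rabs (e (S k) x - e k x) <= C * (/2^k - /2^(S k))).
  { intros k x. unfold e. rewrite fkS.
    replace (2^(S k) * x) with (2 * (2^k * x)) by (simpl; ring).
    rewrite <- (fl_half (2^k * x)).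
    eapply Rle_trans. apply near_step; auto.
    unfold dl, C. simpl. right. field. specialize (Hp k); lra. }
  assert (ecauchy : forall k p x, Rabs (e (k+p)%nat x - e k x) <= C * (/2^k - /2^(k+p))).
  { intros k p x. induction p.
    - rewrite Nat.add_0_r, Rminus_diag, Rabs_R0. lra.
    - replace (e (k + S p)%nat x - e k x) with ((e (S (k+p)) x - e (k+p)%nat x) + (e (k+p)%nat x - e k x))
        by (rewrite Nat.add_succ_r; ring).
      eapply Rle_trans. apply Rabs_triang.
      rewrite Nat.add_succ_r. pose proof (estep (k+p)%nat x). lra. }
  assert (ecauchy2 : forall k j x, (j >= k)%nat -> Rabs (e j x - e k x) <= C / 2^k).
  { intros k j x Hj. replace j with (k + (j-k))%nat by lia.
    eapply Rle_trans. apply ecauchy. unfold Rdiv.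
    assert (0 < / 2^(k + (j-k))) by (apply Rinv_0_lt_compat; auto). nra. }
  assert (Hcc : forall x, Cauchy_crit (fun k => e k x)).
  { intros x eps He. destruct (small_pow (2*C) eps He) as [K HK].
    exists K. intros a b Ha Hb. unfold R_dist.
    pose proof (ecauchy2 K a x Ha). pose proof (ecauchy2 K b x Hb).
    specialize (HK K (le_n _)). rewrite Rabs_pos_eq in HK by lra.
    pose proof (Rabs_triang (e a x - e K x) (e K x - e b x)).
    replace (e a x - e K x + (e K x - e b x)) with (e a x - e b x) in H1 by ring.
    rewrite (Rabs_minus_sym (e K x)) in H1. unfold Rdiv in HK. lra. }
  set (F := fun x => proj1_sig (R_complete _ (Hcc x))).
  assert (HF : forall k x, Rabs (e k x - F x) <= C / 2^k).
  { intros k x. rewrite Rabs_minus_sym. apply (lim_le (fun k => e k x) _ _ _ k).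
    - unfold F. destruct (R_complete _ (Hcc x)); auto.
    - intros j Hj. apply ecauchy2; auto. }
  assert (Hlipz : forall k a b, Rabs (fk k b - fk k a) <= dl k * Rabs (IZR (b - a))).
  { intros k a b. assert (Hd := dpos _ _ (Hdiff k)).
    destruct (Z.le_gt_cases a b).
    - replace b with (a + Z.of_nat (Z.to_nat (b-a)))%Z at 1 by lia.
      eapply Rle_trans. apply (lipnat n Hn). apply Hdiff.
      rewrite INR_IZR_INZ, Z2Nat.id by lia. rewrite Rabs_pos_eq. lra. apply IZR_le; lia.
    - rewrite Rabs_minus_sym.
      replace a with (b + Z.of_nat (Z.to_nat (a-b)))%Z at 1 by lia.
      eapply Rle_trans. apply (lipnat n Hn). apply Hdiff.
      rewrite INR_IZR_INZ, Z2Nat.id by lia. rewrite Rabs_left1. rewrite <- opp_IZR.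
      replace (- (b - a))%Z with (a - b)%Z by lia. lra.
      apply IZR_le; lia. }
  assert (HFlip : forall x y, Rabs (F x - F y) <= 2 * M * Rabs (x - y)).
  { intros x y.
    assert (Hk : forall k, Rabs (F x - F y) <= (2*C + 2*M) / 2^k + 2 * M * Rabs (x - y)).
    { intros k.
      pose proof (HF k x) as Ax. pose proof (HF k y) as Ay.
      pose proof (Hlipz k (fl (2^k * y)) (fl (2^k*x))) as Al.
      assert (Hfl : Rabs (IZR (fl (2^k*x) - fl (2^k*y))) <= 2^k * Rabs (x - y) + 1).
      { pose proof (fl_spec (2^k*x)). pose proof (fl_spec (2^k*y)). rewrite minus_IZR.
        replace (2^k * Rabs (x-y)) with (Rabs (2^k*x - 2^k*y)).
        2:{ rewrite <- Rmult_minus_distr_l, Rabs_mult, Rabs_pos_eq; auto. left; auto. }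
        unfold Rabs; repeat destruct Rcase_abs; lra. }
      assert (Hdl : 0 <= dl k) by (unfold dl; unfold Rdiv; apply Rmult_le_pos; [lra|left; apply Rinv_0_lt_compat; auto]).
      assert (Am : dl k * Rabs (IZR (fl (2^k*x) - fl (2^k*y))) <= 2 * M / 2^k + 2*M*Rabs (x-y)).
      { eapply Rle_trans. apply Rmult_le_compat_l. auto. apply Hfl.
        unfold dl. right. field. specialize (Hp k); lra. }
      unfold e in *.
      pose proof (Rabs_triang (F x - fk k (fl (2^k*x))) (fk k (fl (2^k*x)) - F y)) as T1.
      pose proof (Rabs_triang (fk k (fl (2^k*x)) - fk k (fl (2^k*y))) (fk k (fl (2^k*y)) - F y)) as T2.
      replace (F x - fk k (fl (2^k*x)) + (fk k (fl (2^k*x)) - F y)) with (F x - F y) in T1 by ring.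
      replace (fk k (fl (2^k*x)) - fk k (fl (2^k*y)) + (fk k (fl (2^k*y)) - F y))
        with (fk k (fl (2^k*x)) - F y) in T2 by ring.
      rewrite Rabs_minus_sym in Ax.
      replace ((2*C + 2*M) / 2^k) with (C/2^k + C/2^k + 2*M/2^k) by (field; specialize (Hp k); lra).
      lra. }
    destruct (Rle_or_lt (Rabs (F x - F y)) (2 * M * Rabs (x - y))) as [|Hlt]; auto.
    destruct (small_pow (2*C+2*M) _ (ltac:(lra) : Rabs (F x - F y) - 2 * M * Rabs (x - y) > 0)) as [K HK].
    specialize (HK K (le_n _)). specialize (Hk K). rewrite Rabs_pos_eq in HK by lra. lra. }
  exists F. split.
  - intros x eps He. exists (eps / (2*M+1)). split.
    { apply Rdiv_lt_0_compat; lra. }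
    intros y [_ Hy]. simpl in *. unfold R_dist in *.
    eapply Rle_lt_trans. apply HFlip.
    apply Rle_lt_trans with (2*M * (eps/(2*M+1))).
    + apply Rmult_le_compat_l; lra.
    + assert (0 < eps/(2*M+1)) by (apply Rdiv_lt_0_compat; lra).
      replace (2*M*(eps/(2*M+1))) with (eps - eps/(2*M+1)) by (field; lra). lra.
  - intros eps He. destruct (small_pow C eps He) as [K HK]. exists K.
    intros k Hk i. specialize (HK k Hk). rewrite Rabs_pos_eq in HK by lra.
    pose proof (HF k (IZR i / 2^k)). unfold e in H.
    replace (2^k * (IZR i / 2^k)) with (IZR i) in H by (field; apply pow_nonzero; lra).
    rewrite (fl_unique (IZR i) i) in H by lra. unfold fk in H. lra.
Qed.
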